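(* For $I,J\in\mathcal I$ with $I\vartriangleleft J$, the unique $\vartriangleleft$-minimal set in $\mathcal M(I)$ and the unique $\vartriangleleft$-minimal set in $\mathcal M(J)$ are identical.
   Context: Let $(a_i)_{i=1,\dots,n}$ be a sequence of distinct integers between $1$ and $n$, and set $a_0=0$; write $A=(a_i)_{i=0,1,\dots,n}$. A set $I\subseteq\{0\}\cup[n]$ is feasible if $a_i<a_j$ for all $i,j\in I$ with $i<j$; $\mathcal I$ denotes the family of feasible sets of maximum cardinality. Patience sorting: start with empty piles $P_0,\dots,P_n$; for $i=0,1,\dots,n$ in order, put $a_i$ on top of the pile $P_j$ with smallest index $j$ such that $P_j$ is empty or the top element of $P_j$ is greater than $a_i$. Let $P_0,\dots,P_k$ be the resulting nonempty piles. Say $a_u$ is placed below $a_v$ on a pile if both lie on the same pile and $a_u$ was put there before $a_v$. For $I,J\in\mathcal I$, write $I\vartriangleleft J$ if $I\setminus J=\{u\}$ and $J\setminus I=\{v\}$ for some $u,v$ such that $a_u$ is placed strictly below $a_v$ on pile $P_i$ for some $1\le i\le k$. For $I\in\mathcal I$, $\mathcal M(I)\subseteq\mathcal I$ is the smallest family containing $I$ such that whenever $J\in\mathcal M(I)$ and $J'\vartriangleleft J$ then $J'\in\mathcal M(I)$. A set $I\in\mathcal I$ is $\vartriangleleft$-minimal if there is no $J\in\mathcal I$ with $J\vartriangleleft I$. (Each $\mathcal M(I)$ contains exactly one $\vartriangleleft$-minimal set.) *)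

(* Defs.v *)
From mathcomp Require Import all_boot.
Unset Printing Implicit Defensive.

(* World: plain MathComp.
   The sequence is given by a : nat -> nat (only a 1, ..., a n matter);
   indices 0..n are the ordinals 'I_n.+1, and A i := a_i with a_0 = 0. *)

Section Patience.
Variables (n : nat) (a : nat -> nat).

Definition A (i : nat) : nat := if i is 0 then 0 else a i.

Definition feasible (I : {set 'I_n.+1}) : Prop :=
  forall i j : 'I_n.+1, i \in I -> j \in I -> (i < j)%N -> (A i < A j)%N.

Definition maxfeas (I : {set 'I_n.+1}) : Prop :=
  feasible I /\ forall J : {set 'I_n.+1}, feasible J -> (#|J| <= #|I|)%N.

(* Patience sorting. Piles are lists of indices, top of pile first.
   Index i is put on the first pile whose top element is greater than a_i,
   or on a new (empty) pile at the end if there is none. *)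
Fixpoint place (i : nat) (piles : seq (seq nat)) : seq (seq nat) :=
  match piles with
  | [::] => [:: [:: i]]
  | p :: ps =>
      if (match p with [::] => true | t :: _ => (A i < A t)%N end)
      then (i :: p) :: ps
      else p :: place i ps
  end.

Definition piles : seq (seq nat) := foldl (fun ps i => place i ps) [::] (iota 0 n.+1).

(* a_u is placed strictly below a_v on pile P_j for some 1 <= j <= k.
   Element a_i is put on its pile at step i, so "a_u was put there before a_v"
   means u < v. *)
Definition below (u v : 'I_n.+1) : Prop :=
  exists j : nat, [/\ (1 <= j)%N, (j < size piles)%N,
    (nat_of_ord u \in nth [::] piles j), (nat_of_ord v \in nth [::] piles j) & (u < v)%N].

Definition lhd (I J : {set 'I_n.+1}) : Prop :=
  maxfeas I /\ maxfeas J /\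
  exists u v : 'I_n.+1, [/\ I :\: J = [set u], J :\: I = [set v] & below u v].

Definition inM (I K : {set 'I_n.+1}) : Prop :=
  forall F : {set {set 'I_n.+1}},
    I \in F -> (forall J J', J \in F -> lhd J' J -> J' \in F) -> K \in F.

Definition lhd_minimal (I : {set 'I_n.+1}) : Prop :=
  maxfeas I /\ ~ (exists J, lhd J I).

End Patience.

(* Main.v *)
Require Import Defs.
From mathcomp Require Import all_boot zify.
From Stdlib Require Import ClassicalEpsilon Classical.
Set Warnings "-notation-overridden".

Section Piles.
Variables (n : nat) (a : nat -> nat).

Definition rr (x y : nat) := (y < x) && (A a x < A a y).

Lemma rr_trans : transitive rr.
Proof. move=> y x z /andP[h1 h2] /andP[h3 h4]; apply/andP; split; lia. Qed.

Lemma sorted_below {p x y} : sorted rr p -> x \in p -> y \in p -> x < y -> A a y < A a x.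
Proof.
elim: p => [|t q IH] //= Hs.
move: Hs; rewrite (path_sortedE rr_trans) => /andP[/allP Ht Hq].
rewrite !inE => /orP[/eqP->|xq] /orP[/eqP->|yq] lt.
- lia.
- by move: (Ht y yq) => /andP[]; lia.
- by move: (Ht x xq) => /andP[]; lia.
- exact: IH.
Qed.

Lemma place_perm i ps : perm_eq (flatten (place a i ps)) (i :: flatten ps).
Proof.
elim: ps => [|p ps IH] //=.
case: ifP => _ /=; first by [].
apply: (@perm_trans _ (p ++ i :: flatten ps)); first by rewrite perm_cat2l.
apply/permPl; exact: (perm_catCA p [:: i]).
Qed.

Lemma place_sorted i ps : all (sorted rr) ps -> (forall x, x \in flatten ps -> x < i) ->
  all (sorted rr) (place a i ps).
Proof.
elim: ps => [|p ps IH] //= /andP[sp sps] lt.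
case: ifP => c /=.
- rewrite sps andbT.
  case: p sp c lt => [|t q] //= sp c lt.
  rewrite sp andbT /rr c andbT; apply: lt; by rewrite inE eqxx.
- rewrite sp /=; apply: IH => // x xi; apply: lt; by rewrite mem_cat xi orbT.
Qed.

Definition pilesm m := foldl (fun ps i => place a i ps) [::] (iota 0 m).

Lemma pilesm_inv m : perm_eq (flatten (pilesm m)) (iota 0 m) /\ all (sorted rr) (pilesm m).
Proof.
elim: m => [|m [IH1 IH2]] //.
rewrite /pilesm -addn1 iotaD foldl_cat /= -/(pilesm m).
split.
- apply: perm_trans (place_perm _ _) _.
  by rewrite add0n perm_sym perm_catC /= perm_cons perm_sym.
- apply: place_sorted => // x; rewrite (perm_mem IH1) mem_iota; lia.
Qed.

Lemma nth_flatten (s : seq (seq nat)) k x : k < size s -> x \in nth [::] s k -> x \in flatten s.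
Proof. move=> ks xk; apply/flattenP; exists (nth [::] s k) => //; exact: mem_nth. Qed.

Lemma uniq_pile {s : seq (seq nat)} {x j1 j2} : uniq (flatten s) -> j1 < size s -> j2 < size s ->
  x \in nth [::] s j1 -> x \in nth [::] s j2 -> j1 = j2.
Proof.
elim: s j1 j2 => [|p s IH] [|j1] [|j2] //=; rewrite cat_uniq => /and3P[_ hn us] l1 l2 x1 x2.
- case/negP: hn; apply/hasP; exists x => //; exact: nth_flatten x2.
- case/negP: hn; apply/hasP; exists x => //; exact: nth_flatten x1.
- congr S; exact: IH x1 x2.
Qed.

Lemma below_lt {u v : 'I_n.+1} : below n a u v -> u < v /\ A a v < A a u.
Proof.
case=> j [_ js hu hv uv]; split => //.
have [_ /allP al] := pilesm_inv n.+1.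
have sp : sorted rr (nth [::] (piles n a) j) by apply: al; exact: mem_nth.
exact: (sorted_below sp hu hv uv).
Qed.

Lemma below_same {u w x : 'I_n.+1} : below n a u x -> below n a w x -> u < w -> below n a u w.
Proof.
case=> j1 [h1 s1 u1 x1 _] [j2 [_ s2 w2 x2 _]] uw.
have [P _] := pilesm_inv n.+1.
have uq : uniq (flatten (piles n a)) by rewrite (perm_uniq P) iota_uniq.
have ej := uniq_pile uq s1 s2 x1 x2. subst j2.
by exists j1.
Qed.
Local Notation T := ('I_n.+1).

Lemma lhd_mem {I J : {set T}} {u v} : I :\: J = [set u] -> J :\: I = [set v] ->
  [/\ u \in I, u \notin J, v \in J, v \notin I &
      forall z, (z \in I) = (z == u) || ((z \in J) && (z != v))].
Proof.
move/setP=> e1 /setP e2.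
have := e1 u; have := e2 v; rewrite !inE !eqxx => /andP[h1 h2] /andP[h3 h4].
split => // z.
have := e1 z; have := e2 z; rewrite !inE.
by case: (z \in I); case: (z \in J) => /= f2 f1; rewrite -?f1 -?f2.
Qed.

Inductive reach : {set T} -> {set T} -> Prop :=
| rrefl K : reach K K
| rstep J J' K : lhd n a J' J -> reach J' K -> reach J K.

Lemma reach_trans J L M : reach J L -> reach L M -> reach J M.
Proof. elim=> // J0 J' K h _ IH /IH; exact: rstep. Qed.

Lemma reach_maxfeas J L : reach J L -> maxfeas n a J -> maxfeas n a L.
Proof. elim=> // J0 J' K [h1 [h2 _]] _ IH _; exact: IH. Qed.

Definition mu (J : {set T}) := \sum_(i in J) (i : nat).

Lemma lhd_mu J' J : lhd n a J' J -> mu J' < mu J.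
Proof.
case=> _ [_ [u [v [e1 e2 b]]]].
have [uv _] := below_lt b.
have [uI uJ vJ vI m] := lhd_mem e1 e2.
rewrite /mu (bigD1 u uI) [X in _ < X](bigD1 v vJ) /=.
rewrite (eq_bigl (fun i => (i \in J) && (i != v))); first by rewrite ltn_add2r.
move=> z /=; rewrite -[X in X && _ = _]/(z \in J') m.
case: (eqVneq z u) => [->|_] /=; [by rewrite (negbTE uJ) | by rewrite andbT].
Qed.

Lemma pairlem (f : nat -> nat) {u x w y : nat} : x < y -> u < x -> f x < f u -> w < y -> f y < f w ->
  (u < y -> f u < f y) -> (w < x -> f w < f x) -> w != x -> u < w /\ f u < f w.
Proof.
move=> h1 h2 h3 h4 h5 h6 h7 h8.
have h9 := h6 (ltn_trans h2 h1).
have h10 : x < w by case: (ltngtP w x) h8 => // h _; have := h7 h; lia.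
lia.
Qed.

Lemma neqF {U : eqType} {p q : U} : p != q -> (p == q) = false /\ (q == p) = false.
Proof. by move=> h; rewrite (negbTE h) eq_sym (negbTE h). Qed.

Lemma ord_neq (p q : T) : (p : nat) != q -> p != q.
Proof. by apply: contra => /eqP ->. Qed.

Ltac memcase z facts :=
  do 6 (try match goal with
  | |- context [z == ?w] => case: (eqVneq z w) => [->|]; [rewrite ?facts ?eqxx //= | let h := fresh "h" in intro h; rewrite ?(negbTE h) ?facts ?eqxx //=]
  end); try (match goal with |- context [z \in ?J] => by case: (z \in J) end).

Lemma lconf J J1 J2 : lhd n a J1 J -> lhd n a J2 J -> exists L, reach J1 L /\ reach J2 L.
Proof.
move=> hJ1 hJ2.
case: (hJ1) => mJ1 [mJ [u [x [e1 e2 bux]]]]; case: (hJ2) => mJ2 [_ [w [y [e3 e4 bwy]]]].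
have [uJ1 uJ xJ xJ1 m1] := lhd_mem e1 e2.
have [wJ2 wJ yJ yJ2 m2] := lhd_mem e3 e4.
have [ux Axu] := below_lt bux.
have [wy Ayw] := below_lt bwy.
case: (eqVneq x y) => [exy|nxy].
  subst y.
  case: (eqVneq u w) => [euw|nuw].
    subst w.
    have -> : J2 = J1 by apply/setP => z; rewrite m1 m2.
    by exists J1; split; constructor.
  have ne : (u : nat) != w by apply: contra nuw => /eqP h; apply/eqP/val_inj.
  have nuw' : w != u by rewrite eq_sym.
  have uwx : u != x by apply: contraNneq uJ => ->.
  have wux : w != x by apply: contraNneq wJ => ->.
  have xuw : x != u by rewrite eq_sym.
  have xwx : x != w by rewrite eq_sym.
  have F := (negbTE nuw, negbTE nuw', negbTE uwx, negbTE wux, negbTE xuw, negbTE xwx, negbTE uJ, negbTE wJ, xJ).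
  case: (ltngtP u w) ne => // h _.
  - exists J1; split; first by constructor.
    apply: rstep (rrefl _); split=> //; split=> //; exists u, w; split.
    + apply/setP => z; rewrite !inE m1 m2; memcase z F.
    + apply/setP => z; rewrite !inE m1 m2; memcase z F.
    + exact: below_same bux bwy h.
  - exists J2; split; last by constructor.
    apply: rstep (rrefl _); split=> //; split=> //; exists w, u; split.
    + apply/setP => z; rewrite !inE m1 m2; memcase z F.
    + apply/setP => z; rewrite !inE m1 m2; memcase z F.
    + exact: below_same bwy bux h.
have nxy' : (x : nat) != y by apply: contra nxy => /eqP h; apply/eqP/val_inj.
have yJ1 : y \in J1 by rewrite m1 yJ (eq_sym y x) nxy orbT.
have xJ2 : x \in J2 by rewrite m2 xJ nxy orbT.
have Fuy : u < y -> A a u < A a y := mJ1.1 u y uJ1 yJ1.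
have Fwx : w < x -> A a w < A a x := mJ2.1 w x wJ2 xJ2.
have wx : (w : nat) != x by apply: contraNneq wJ => /val_inj ->.
have uy : (u : nat) != y by apply: contraNneq uJ => /val_inj ->.
have ord : (u < w /\ A a u < A a w) \/ (w < u /\ A a w < A a u).
  case: (ltngtP x y) nxy' => // h _.
  - by left; apply: (pairlem (A a) h ux Axu wy Ayw Fuy Fwx wx).
  - by right; apply: (pairlem (A a) h wy Ayw ux Axu Fwx Fuy uy).
have nuw : u != w.
  apply: ord_neq; case: ord => -[h _]; first by rewrite ltn_eqF.
  by rewrite eq_sym ltn_eqF.
have nux : u != x by apply: contraNneq uJ => ->.
have nwy : w != y by apply: contraNneq wJ => ->.
have nuy : u != y by apply: contraNneq uJ => ->.
have nwx : w != x by apply: contraNneq wJ => ->.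
have [f1 f2] := neqF nuw. have [f3 f4] := neqF nux. have [f5 f6] := neqF nwy.
have [f7 f8] := neqF nuy. have [f9 f10] := neqF nwx. have [f11 f12] := neqF nxy.
have F := (f1, f2, f3, f4, f5, f6, f7, f8, f9, f10, f11, f12, negbTE uJ, negbTE wJ, xJ, yJ).
pose L := [set z | (z == u) || (z == w) || ((z \in J) && (z != x) && (z != y))].
have C0 z : (z \in J) && (z != x) && (z != y) -> z \in J by case/andP => /andP[].
have C1 z : (z \in J) && (z != x) && (z != y) -> z \in J1.
  by case/andP => /andP[zJ zx] _; rewrite m1 zJ zx orbT.
have C2 z : (z \in J) && (z != x) && (z != y) -> z \in J2.
  by case/andP => /andP[zJ _] zy; rewrite m2 zJ zy orbT.
have feasL : feasible n a L.
  move=> i j; rewrite !inE => Hi Hj.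
  case/orP: Hi => [/orP[/eqP->|/eqP->]|Hi]; case/orP: Hj => [/orP[/eqP->|/eqP->]|Hj];
    rewrite ?ltnn //.
  - case: ord => -[h1 h2] h3 //; by have := ltn_trans h1 h3; rewrite ltnn.
  - by apply: mJ1.1 => //; exact: C1.
  - case: ord => -[h1 h2] h3 //; by have := ltn_trans h1 h3; rewrite ltnn.
  - by apply: mJ2.1 => //; exact: C2.
  - by apply: mJ1.1 => //; exact: C1.
  - by apply: mJ2.1 => //; exact: C2.
  - by apply: mJ.1; exact: C0.
have cardL : #|J| <= #|L|.
  rewrite (cardsD1 x J) (cardsD1 y (J :\ x)) (cardsD1 u L) (cardsD1 w (L :\ u)).
  have -> : J :\ x :\ y = L :\ u :\ w.
    by apply/setP => z; rewrite !inE; memcase z F.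
  by rewrite !inE !eqxx xJ yJ f12 f2 /=.
have mL : maxfeas n a L by split=> // K fK; exact: leq_trans (mJ.2 K fK) cardL.
exists L; split.
- apply: rstep (rrefl _); split=> //; split=> //; exists w, y; split => //.
  + by apply/setP => z; rewrite !inE m1; memcase z F.
  + by apply/setP => z; rewrite !inE m1; memcase z F.
- apply: rstep (rrefl _); split=> //; split=> //; exists u, x; split => //.
  + by apply/setP => z; rewrite !inE m2; memcase z F.
  + by apply/setP => z; rewrite !inE m2; memcase z F.
Qed.
End Piles.

Arguments reach_trans {n a J L M}.
Arguments reach_maxfeas {n a J L}.
Arguments lhd_mu {n a J' J}.
Arguments lconf {n a J J1 J2}.
Arguments rstep {n a J J' K}.
Arguments rrefl {n a K}.

Section Main.
Variables (n : nat) (a : nat -> nat).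
Local Notation T := ('I_n.+1).
Local Notation reach := (reach n a).

Definition asb (P : Prop) : bool := if excluded_middle_informative P then true else false.
Lemma asbP (P : Prop) : asb P <-> P.
Proof. by rewrite /asb; case: excluded_middle_informative. Qed.

Lemma reach_snoc I J J' : reach I J -> lhd n a J' J -> reach I J'.
Proof. move=> h1 h2; apply: (reach_trans h1); exact: rstep h2 rrefl. Qed.

Lemma inM_reach I K : inM n a I K -> reach I K.
Proof.
move=> h.
have H := h [set K0 | asb (reach I K0)].
have : K \in [set K0 | asb (reach I K0)].
  apply: H.
  - by rewrite inE; apply/asbP; constructor.
  - move=> J J'; rewrite !inE => /asbP h1 h2; apply/asbP; exact: reach_snoc h1 h2.
by rewrite inE => /asbP.
Qed.

Lemma reach_min J K : ~ (exists J', lhd n a J' J) -> reach J K -> K = J.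
Proof.
move=> nJ r; inversion r as [|J0 J' K0 h r' e1 e2]; first by [].
by case: nJ; exists J'.
Qed.

Lemma reach_inv J K : reach J K -> K = J \/ exists J1, lhd n a J1 J /\ reach J1 K.
Proof. by case=> [K0|J0 J1 K0 h r]; [left | right; exists J1]. Qed.

Lemma exists_min m J : mu n J < m -> maxfeas n a J -> exists M, reach J M /\ lhd_minimal n a M.
Proof.
elim: m J => // m IH J lt mJ.
case: (classic (exists J', lhd n a J' J)) => [[J' h]|nh].
- have lt' : mu n J' < m by have := lhd_mu h; lia.
  have [M [r mM]] := IH J' lt' h.1.
  by exists M; split => //; exact: rstep h r.
- by exists J; split => //; constructor.
Qed.

Lemma uniq_min m J : mu n J < m -> forall K K', reach J K -> lhd_minimal n a K ->
  reach J K' -> lhd_minimal n a K' -> K = K'.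
Proof.
elim: m J => // m IH J lt K K' rK mK rK' mK'.
case: (reach_inv _ _ rK) => [eK|[J1 [h1 r1]]].
  by subst K; rewrite (reach_min _ _ mK.2 rK').
case: (reach_inv _ _ rK') => [eK'|[J3 [h2 r2]]].
  by subst K'; rewrite (reach_min _ _ mK'.2 rK).
have [L [rL1 rL2]] := lconf h1 h2.
have mL : maxfeas n a L by exact: (reach_maxfeas rL1 h1.1).
have [M [rM mM]] := exists_min _ _ (ltnSn (mu n L)) mL.
have e1 : K = M.
  apply: (IH J1) => //; first by have := lhd_mu h1; lia.
  exact: reach_trans rL1 rM.
have e2 : K' = M.
  apply: (IH J3) => //; first by have := lhd_mu h2; lia.
  exact: reach_trans rL2 rM.
by rewrite e1 e2.
Qed.
End Main.

Theorem corollary2 (n : nat) (a : nat -> nat)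
  (ha_range : forall i, (1 <= i <= n)%N -> (1 <= a i <= n)%N)
  (ha_inj : forall i j, (1 <= i <= n)%N -> (1 <= j <= n)%N -> a i = a j -> i = j)
  (I J : {set 'I_n.+1}) :
  lhd n a I J ->
  forall K K' : {set 'I_n.+1},
    inM n a I K -> lhd_minimal n a K ->
    inM n a J K' -> lhd_minimal n a K' ->
    K = K'.
Proof.
move=> hIJ K K' hK mK hK' mK'.
apply: (@uniq_min n a _ J (ltnSn _) K K' _ mK _ mK').
- exact: rstep hIJ (inM_reach _ _ _ _ hK).
- exact: (inM_reach _ _ _ _ hK').
Qed.
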